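(* Let $G$ be a finite simple graph with $V(G)=\{v_1,\dots,v_n\}$, where vertex $v_i$ carries positive integer weight $t_i$. Let $G(v_1,\dots,v_n)$ be the unweighted graph obtained by replacing each $v_i$ by an independent set $I_i$ of $t_i$ new vertices, where a vertex of $I_i$ is adjacent to a vertex of $I_j$ ($i\neq j$) if and only if $v_iv_j\in E(G)$, and no two vertices of the same $I_i$ are adjacent. Then weighted Grim played on $G$ and ordinary Grim played on $G(v_1,\dots,v_n)$ have the same outcome: one is an $\mathcal{N}$ position if and only if the other is.
   Context: Grim is a two-player game on a finite simple undirected graph. Any isolated vertices of the starting graph are deleted before play begins. Players alternate moves; in ordinary (unweighted) Grim a move consists of selecting a vertex of the current graph and deleting it together with all its incident edges, after which every vertex that has become isolated is also deleted. The player who makes the last legal move wins (a player facing the empty graph has no move and loses). In weighted Grim each vertex carries a positive integer weight; a vertex of weight $t$ is deleted only once it has been selected $t$ times (each selection is a move and lowers its remaining weight by one, the selection that brings it to zero deleting it with its incident edges), or when it becomes isolated, in which case it is deleted. A position is an $\mathcal{N}$ position if the player about to move has a winning strategy, and a $\mathcal{P}$ position otherwise. *)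

(* Defs.v *)
From mathcomp Require Import all_boot.
Set Implicit Arguments. Unset Strict Implicit. Unset Printing Implicit Defensive.

(* Generic impartial game under normal play, given by a move relation.
   [Nwin s]: the player to move from s has a winning strategy (N position);
   [Ppos s]: every move from s leads to an N position (P position).
   All games considered here are finite (every play terminates). *)
Section Game.
Variables (S : Type) (move : S -> S -> Prop).
Inductive Nwin : S -> Prop :=
  Nwin_intro s s' : move s s' -> Ppos s' -> Nwin s
with Ppos : S -> Prop :=
  Ppos_intro s : (forall s', move s s' -> Nwin s') -> Ppos s.
End Game.

Section Grim.
Variables (T : finType) (e : rel T).

Definition isolated (A : {set T}) (v : T) : bool := [forall u in A, ~~ e v u].

Definition clean (A : {set T}) : {set T} := [set v in A | ~~ isolated A v].

(* Ordinary Grim: a position is the vertex set of the current (induced) graph. *)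
Definition grim_move (A A' : {set T}) : Prop :=
  exists2 v, v \in A & A' = clean (A :\ v).

Definition grim_start : {set T} := clean [set: T].

(* Weighted Grim: a position is the current vertex set together with the
   remaining weights of the vertices. *)
Definition wgrim_move (p p' : {set T} * (T -> nat)) : Prop :=
  exists2 v, v \in p.1 &
    p' = if 1 < p.2 v
         then (p.1, fun u => if u == v then (p.2 v).-1 else p.2 u)
         else (clean (p.1 :\ v), p.2).

Definition wgrim_start (w : T -> nat) : {set T} * (T -> nat) := (clean [set: T], w).
End Grim.

Definition blowup (T : finType) (w : T -> nat) : finType := {v : T & 'I_(w v)}.

Definition blowup_rel (T : finType) (e : rel T) (w : T -> nat) : rel (blowup w) :=
  fun x y => e (tag x) (tag y).
Arguments blowup_rel [T] e w _ _.

(* Main.v *)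
Require Import Defs.
From mathcomp Require Import all_boot.

Set Implicit Arguments. Unset Strict Implicit. Unset Printing Implicit Defensive.

Scheme Nwin_mind := Induction for Nwin Sort Prop
  with Ppos_mind := Induction for Ppos Sort Prop.

Lemma bisim S1 S2 (m1 : S1 -> S1 -> Prop) (m2 : S2 -> S2 -> Prop)
  (R : S1 -> S2 -> Prop)
  (f : forall s t s', R s t -> m1 s s' -> exists2 t', m2 t t' & R s' t')
  (b : forall s t t', R s t -> m2 t t' -> exists2 s', m1 s s' & R s' t') :
  forall s, Nwin m1 s -> forall t, R s t -> Nwin m2 t.
Proof.
apply: (@Nwin_mind S1 m1 (fun s _ => forall t, R s t -> Nwin m2 t)
                       (fun s _ => forall t, R s t -> Ppos m2 t)).
- move=> s s' ms' _ IH t Rst.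
  have [t' mt' Rt'] := f _ _ _ Rst ms'.
  exact: Nwin_intro mt' (IH _ Rt').
- move=> s _ IH t Rst; constructor => t' mt'.
  have [s' ms' Rs'] := b _ _ _ Rst mt'.
  exact: IH _ ms' _ Rs'.
Qed.

Section Main.
Variables (T : finType) (e : rel T) (e_sym : symmetric e) (w : T -> nat).

Definition cnt (X : {set blowup w}) (v : T) := #|[set y in X | tag y == v]|.

Definition Rel0 (A : {set T}) (r : T -> nat) (X : {set blowup w}) :=
  (forall u, (u \in A) = (0 < cnt X u)) /\ (forall u, u \in A -> r u = cnt X u).

Definition Rel (p : {set T} * (T -> nat)) X := clean e p.1 = p.1 /\ Rel0 p.1 p.2 X.

Lemma clean_idem A : clean e (clean e A) = clean e A.
Proof.
apply/setP => v; rewrite [in LHS]inE.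
case: (boolP (v \in clean e A)) => //= vC.
move: (vC); rewrite inE => /andP[vA].
rewrite /isolated => /forallPn [u]; rewrite negb_imply negbK => /andP[uA evu].
apply/forallPn; exists u; rewrite negb_imply negbK evu andbT inE uA /=.
by apply/forallPn; exists v; rewrite negb_imply negbK vA e_sym evu.
Qed.

Lemma iso_eq (A : {set T}) X (hA : forall u, (u \in A) = (0 < cnt X u)) y :
  isolated (blowup_rel e w) X y = isolated e A (tag y).
Proof.
rewrite /isolated; apply/forallP/forallP => H u.
- apply/implyP => uA; rewrite hA in uA.
  case/card_gt0P: uA => z; rewrite inE => /andP[zX /eqP <-].
  by move: (H z); rewrite zX.
- apply/implyP => zX.
  have tA : tag u \in A by rewrite hA; apply/card_gt0P; exists u; rewrite inE zX eqxx.
  by move: (H (tag u)); rewrite tA.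
Qed.

Lemma cnt_clean (A : {set T}) X (hA : forall u, (u \in A) = (0 < cnt X u)) u :
  cnt (clean (blowup_rel e w) X) u = if isolated e A u then 0 else cnt X u.
Proof.
rewrite /cnt /clean; case: ifP => iso.
- apply/eqP; rewrite cards_eq0; apply/eqP; apply/setP => y; rewrite !inE; idtac.
  case: eqP => [tu|]; last by rewrite andbF.
  by rewrite (iso_eq hA) tu iso andbF.
- apply: eq_card => y; rewrite !inE (iso_eq hA).
  by case: eqP => [->|]; [rewrite iso andbT | rewrite !andbF].
Qed.

Lemma clean_rel A r X : Rel0 A r X -> Rel0 (clean e A) r (clean (blowup_rel e w) X).
Proof.
case=> hA hr; split => u.
- by rewrite (cnt_clean hA) inE hA; case: (isolated e A u); rewrite ?andbF ?andbT.
- by rewrite inE => /andP[uA niso]; rewrite (cnt_clean hA) (negbTE niso) hr.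
Qed.

Lemma cnt_D1 (X : {set blowup w}) x u : x \in X -> cnt (X :\ x) u = cnt X u - (tag x == u).
Proof.
move=> xX; rewrite /cnt.
have -> : [set y in X :\ x | tag y == u] = [set y in X | tag y == u] :\ x.
  by apply/setP => y; rewrite !inE andbA.
rewrite (cardsD1 x [set y in X | tag y == u]).
have -> : (x \in [set y in X | tag y == u]) = (tag x == u) by rewrite inE xX.
by rewrite addKn.
Qed.

Definition wstep (p : {set T} * (T -> nat)) v :=
  if 1 < p.2 v then (p.1, fun u => if u == v then (p.2 v).-1 else p.2 u)
  else (clean e (p.1 :\ v), p.2).

Lemma step p (X : {set blowup w}) x : Rel p X -> x \in X ->
  Rel (wstep p (tag x)) (clean (blowup_rel e w) (X :\ x)).
Proof.
case: p => A r [/= clA [hA hr]] xX; set v := tag x.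
have vA : v \in A by rewrite hA; apply/card_gt0P; exists x; rewrite inE xX eqxx.
rewrite /wstep /=; case: ifP => hv.
- split => //=; rewrite -{1}clA; apply: clean_rel; split => u.
  + rewrite cnt_D1 // hA; case: (eqVneq v u) => [<-|]; last by rewrite subn0.
    by rewrite -hr // subn1 (ltn_trans _ hv) //; case: (r v) hv => [|[|]].
  + move=> uA; rewrite cnt_D1 // -hr //; case: (eqVneq v u) => [<-|].
      by rewrite subn1.
    by rewrite subn0.
- split; first exact: clean_idem.
  apply: clean_rel; split => u.
  + rewrite !inE cnt_D1 //; case: (eqVneq v u) => [<-|vu].
      rewrite /= -hr //.
      by move: hv; case: (r v) => [|[|]].
    by rewrite subn0 -hA.
  + rewrite !inE => /andP[uv uA]; rewrite /= cnt_D1 // -hr //.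
    by rewrite eq_sym (negbTE uv) subn0.
Qed.

Lemma cntT v : cnt [set: blowup w] v = w v.
Proof.
rewrite /cnt.
have -> : [set y in [set: blowup w] | tag y == v] =
          (@Tagged T v (fun v => 'I_(w v))) @: [set: 'I_(w v)].
  apply/setP => y; rewrite !inE; apply/eqP/imsetP.
  - by case: y => u i /= Eu; subst; exists i; rewrite ?in_setT.
  - by case=> i _ ->.
rewrite card_imset ?cardsT ?card_ord //.
by move=> i j; apply: eq_from_Tagged.
Qed.

End Main.

Theorem theorem2p3 (T : finType) (e : rel T)
  (e_sym : symmetric e) (e_irr : irreflexive e)
  (w : T -> nat) (w_pos : forall v, 0 < w v) :
  Nwin (@wgrim_move T e) (wgrim_start e w) <->
  Nwin (@grim_move (blowup w) (blowup_rel e w)) (grim_start (blowup_rel e w)).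
Proof.
have Rstart : Rel e (wgrim_start e w) (grim_start (blowup_rel e w)).
  split; first exact: clean_idem.
  apply: clean_rel; split => u; first by rewrite inE cntT w_pos.
  by rewrite cntT.
have f : forall s t s', Rel e s t -> wgrim_move e s s' ->
    exists2 t', grim_move (blowup_rel e w) t t' & Rel e s' t'.
  move=> [A r] X s' R [v vA ->].
  have [_ [hA _]] := R.
  move: (vA); rewrite /= hA => /card_gt0P [x]; rewrite inE => /andP[xX /eqP tx].
  exists (clean (blowup_rel e w) (X :\ x)); first by exists x.
  by have := step e_sym R xX; rewrite tx.
have b : forall s t t', Rel e s t -> grim_move (blowup_rel e w) t t' ->
    exists2 s', wgrim_move e s s' & Rel e s' t'.
  move=> [A r] X t' R [x xX ->].
  have [_ [hA _]] := R.
  exists (wstep e (A, r) (tag x)); last exact: step.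
  exists (tag x) => //=; rewrite hA; apply/card_gt0P; exists x; by rewrite inE xX eqxx.
split; move=> H.
- exact: (bisim f b H Rstart).
- apply: (@bisim _ _ _ _ (fun t s => Rel e s t) _ _ _ H _ Rstart).
  + by move=> s t s' R m; have [t' ? ?] := b _ _ _ R m; exists t'.
  + by move=> s t t' R m; have [s' ? ?] := f _ _ _ R m; exists s'.
Qed.
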